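(* The parent relation of the Explicit Tree $\mathbf T$ is well defined and $\mathbf T$ is a directed spanning tree of $\mathbf G$ rooted at $\mathcal R$ (for every $\mathcal U\neq\mathcal R$, $(parent(\mathcal U),\mathcal U)$ is an arc of $\mathbf G$, and the parent relation has no cycles).
   Context: Let $k\ge 2$, $\Sigma=\{0,\dots,k-1\}$ with arithmetic modulo $k$, $n\ge 1$, $s=s[0]\cdots s[n-1]\in\Sigma^n$. For an integer $j$, $ICR_j(s)=s[1]\cdots s[n-1](s[0]+j)$. Let $\mathbf N$ be the set of cycles (orbits) of the permutation $ICR_1$ of $\Sigma^n$. Let $\mathbf G$ be the directed graph on $\mathbf N$ with an arc $(\mathcal U,\mathcal V)$ iff some $s\in\mathcal U$ has $ICR_0(s)\in\mathcal V$. The difference array $\Delta(s)\in\Sigma^n$ is $\Delta(s)[i]=s[i-1]-s[i]$ for $0<i<n$ and $\Delta(s)[0]=s[n-1]-s[0]-1$ (mod $k$). Two strings $s,t$ lie in the same cycle iff $\Delta(s)$ and $\Delta(t)$ are cyclic rotations of each other; for a cycle $\mathcal U$, $\Delta(\mathcal U)$ denotes the lexicographically minimal rotation of $\Delta(s)$ for any $s\in\mathcal U$ (lexicographic order using $0<1<\dots<k-1$). Explicit Tree $\mathbf T$: the root $\mathcal R$ is the cycle of $0^n$; for $\mathcal U\in\mathbf N\setminus\{\mathcal R\}$, let $i$ be the least index with $\Delta(\mathcal U)[i]\ne0$, let $A$ be obtained from $\Delta(\mathcal U)$ by decrementing entry $i$ and incrementing entry $i+1$ (mod $k$), and let $parent(\mathcal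 U)$ be the unique cycle $\mathcal V$ with $\Delta(\mathcal V)$ equal to $A$ up to rotation. *)

(* Defs.v *)
From mathcomp Require Import all_boot all_algebra.
Set Implicit Arguments. Unset Strict Implicit. Unset Printing Implicit Defensive.
Import GRing.Theory.
Local Open Scope ring_scope.

Section ExplicitTree.
Variables (k m : nat).
Local Notation n := m.+1.
Definition str := {ffun 'I_n -> 'Z_k}.

Definition ICR (j : 'Z_k) (s : str) : str :=
  [ffun i : 'I_n => if (i < m)%N then s (inord i.+1) else s ord0 + j].

Definition cycle_of (s : str) : {set str} := [set t | fconnect (ICR 1) s t].

Definition Ncycles : {set {set str}} := [set cycle_of s | s in [set: str]].

Definition Root : {set str} := cycle_of [ffun => 0].

Definition Garc (U V : {set str}) : bool := [exists s in U, ICR 0 s \in V].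

Definition Delta (s : str) : seq 'Z_k :=
  [seq (if i == 0%N then s (inord m) - s ord0 - 1
        else s (inord i.-1) - s (inord i)) | i <- iota 0 n].

Fixpoint lexle (a b : seq 'Z_k) : bool :=
  match a, b with
  | [::], _ => true
  | _ :: _, [::] => false
  | x :: a', y :: b' => ((x : nat) < y)%N || ((x == y) && lexle a' b')
  end.

Definition minrot (d : seq 'Z_k) : seq 'Z_k :=
  foldl (fun mn r => if lexle r mn then r else mn) d
        [seq rot i d | i <- iota 0 (size d)].

Definition roteq (a b : seq 'Z_k) : bool :=
  has (fun i => rot i a == b) (iota 0 (size a)).

Definition DeltaU (U : {set str}) : seq 'Z_k :=
  if [pick s in U] is Some s then minrot (Delta s) else [::].

Definition parentArray (D : seq 'Z_k) : seq 'Z_k :=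
  let i := find (fun x => x != 0) D in
  let j := (i.+1 %% size D)%N in
  let D1 := set_nth 0 D i (nth 0 D i - 1) in
  set_nth 0 D1 j (nth 0 D1 j + 1).

(* parent(U): the set of all strings whose difference array is a rotation of A.
   "well defined" = this set is exactly one cycle of N. *)
Definition tparent (U : {set str}) : {set str} :=
  [set t | roteq (Delta t) (parentArray (DeltaU U))].

End ExplicitTree.

(* Main.v *)
Require Import Defs.
From mathcomp Require Import all_boot all_algebra.
From mathcomp Require Import zify ring.
Set Implicit Arguments. Unset Strict Implicit. Unset Printing Implicit Defensive.
Import GRing.Theory.
Local Open Scope ring_scope.

Lemma ord0_inord (m : nat) : (ord0 : 'I_m.+1) = inord 0.
Proof. by apply: val_inj; rewrite /= inordK. Qed.

Lemma size_Delta k m (s : str k m) : size (Delta s) = m.+1.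
Proof. by rewrite size_map size_iota. Qed.

Lemma nth_Delta k m (s : str k m) l : (l < m.+1)%N ->
  nth 0 (Delta s) l = if l == 0%N then s (inord m) - s (inord 0) - 1
                      else s (inord l.-1) - s (inord l).
Proof.
move=> hl; rewrite (nth_map 0%N) ?size_iota // nth_iota // add0n ord0_inord //.
Qed.

Lemma ICR_inord k m (j : 'Z_k) (s : str k m) l : (l < m.+1)%N ->
  ICR j s (inord l) = if (l < m)%N then s (inord l.+1) else s (inord 0) + j.
Proof. by move=> hl; rewrite ffunE inordK // -ord0_inord. Qed.

Lemma nth_Delta_ICR k m (j : 'Z_k) (s : str k m) l : (l < m.+1)%N ->
  nth 0 (Delta (ICR j s)) l = nth 0 (Delta s) ((l + 1) %% m.+1)
     + (if l == 0%N then j - 1 else 0) + (if l == m then 1 - j else 0).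
Proof.
move=> hl.
have hlt : ((l + 1) %% m.+1 < m.+1)%N by rewrite ltn_mod.
rewrite !nth_Delta //.
case: (ltnP l m) => hlm.
- rewrite modn_small; last by lia.
  rewrite addn1 /= (_ : l == m = false); last by apply/eqP; lia.
  case: eqP => [->|l0].
  + rewrite !ICR_inord //=; try lia.
    rewrite ltnn (_ : (0 < m)%N) //; last by lia. ring.
  + rewrite !ICR_inord; try lia.
    rewrite (_ : (l.-1 < m)%N) ?hlm; last by lia.
    rewrite prednK; last by lia. ring.
- have -> : l = m by lia.
  rewrite addn1 modnn !eqxx /=.
  case: eqP => [m0|m0].
  + have e : (inord m : 'I_m.+1) = inord 0 by apply: val_inj; rewrite /= !inordK; lia.
    rewrite !ICR_inord // ltnn (_ : (0 < m)%N = false) ?e; last by lia. ring.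
  + rewrite !ICR_inord; try lia.
    rewrite ltnn (_ : (m.-1 < m)%N); last by lia.
    rewrite prednK; last by lia. ring.
Qed.

Lemma nth_rot (T : Type) (x0 : T) (s : seq T) r i : (r <= size s)%N -> (i < size s)%N ->
  nth x0 (rot r s) i = nth x0 s ((i + r) %% size s).
Proof.
move=> hr hi; rewrite /rot nth_cat size_drop.
case: ltnP => h.
- rewrite nth_drop modn_small; [by rewrite addnC | lia].
- rewrite nth_take; last by lia.
  have e : (i + r = (i - (size s - r)) + size s)%N by lia.
  by rewrite e modnDr modn_small //; lia.
Qed.

Lemma rot_mod (T : Type) (d : seq T) r : (r <= size d)%N -> rot r d = rot (r %% size d) d.
Proof.
move=> hr; case: (ltnP r (size d)) => h; first by rewrite modn_small.
have e : r = size d by apply/eqP; rewrite eqn_leq hr h.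
by rewrite e modnn rot0 rot_size.
Qed.

Lemma Delta_ICR1 k m (s : str k m) : Delta (ICR 1 s) = rot 1 (Delta s).
Proof.
apply: (@eq_from_nth _ 0); first by rewrite size_rot !size_Delta.
rewrite size_Delta => l hl.
rewrite nth_Delta_ICR // nth_rot ?size_Delta //.
by rewrite subrr !if_same !addr0.
Qed.

Lemma Delta_iter k m (s : str k m) j :
  Delta (iter j (ICR 1) s) = rot (j %% m.+1) (Delta s).
Proof.
elim: j => [|j IH]; first by rewrite mod0n rot0.
rewrite iterS Delta_ICR1 IH rot_add_mod ?size_Delta ?ltn_mod //; last first.
  by apply: ltnW; rewrite ltn_mod.
have h : (j %% m.+1 < m.+1)%N by rewrite ltn_mod.
have h2 : (1 + j %% m.+1 <= size (Delta s))%N by rewrite size_Delta.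
by rewrite /= (rot_mod h2) size_Delta modnDmr add1n.
Qed.

Lemma iterICR1 k m (s : str k m) j l : (j <= m.+1)%N -> (l < m.+1)%N ->
  iter j (ICR 1) s (inord l) =
  if (l + j < m.+1)%N then s (inord (l + j)) else s (inord (l + j - m.+1)) + 1.
Proof.
elim: j l => [|j IH] l hj hl; first by rewrite addn0 hl.
rewrite iterS ICR_inord //.
case: (ltnP l m) => hlm.
- rewrite IH; try lia. by rewrite addSnnS.
- rewrite IH; try lia. rewrite add0n (_ : (j < m.+1)%N); last by lia.
  rewrite (_ : (l + j.+1 < m.+1)%N = false); last by lia.
  by have -> : (l + j.+1 - m.+1 = j)%N by lia.
Qed.

Lemma iter_n k m (s : str k m) : iter m.+1 (ICR 1) s = [ffun i => s i + 1].
Proof.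
apply/ffunP => i; rewrite [in RHS]ffunE.
have := iterICR1 s (leqnn m.+1) (ltn_ord i); rewrite inord_val => ->.
rewrite (_ : (i + m.+1 < m.+1)%N = false); last by lia.
by rewrite addnK inord_val.
Qed.

Lemma iter_const k m (s : str k m) c :
  iter (m.+1 * c) (ICR 1) s = [ffun i => s i + c%:R].
Proof.
elim: c => [|c IH].
  by rewrite muln0 /=; apply/ffunP => i; rewrite ffunE addr0.
rewrite mulnS iterD IH iter_n; apply/ffunP => i; rewrite !ffunE.
by rewrite -(GRing.natr1 _ c); ring.
Qed.

Lemma Delta_shift k m (s t : str k m) : Delta s = Delta t ->
  t = [ffun i => s i + (t (inord 0) - s (inord 0))].
Proof.
move=> hD.
have claim : forall l, (l < m.+1)%N -> t (inord l) - s (inord l) = t (inord 0) - s (inord 0).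
  elim => [//|l IH] hl.
  have := congr1 (nth 0 ^~ l.+1) hD; rewrite !nth_Delta //= => e.
  rewrite -IH; last by lia.
  have -> : t (inord l.+1) - s (inord l.+1) =
     (t (inord l) - s (inord l)) - ((t (inord l) - t (inord l.+1)) - (s (inord l) - s (inord l.+1))) by ring.
  by rewrite e subrr subr0.
apply/ffunP => i; rewrite [in RHS]ffunE.
have := claim i (ltn_ord i); rewrite inord_val => <-; ring.
Qed.

Definition rr (T : Type) (a b : seq T) := exists r, b = rot r a.

Lemma rr_refl T (a : seq T) : rr a a.
Proof. by exists 0%N; rewrite rot0. Qed.

Lemma rr_sym T (a b : seq T) : rr a b -> rr b a.
Proof. by case=> r ->; exists (size (rot r a) - r)%N; rewrite -/(rotr r _) rotK. Qed.

Lemma rr_trans T (a b c : seq T) : rr a b -> rr b c -> rr a c.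
Proof. by case=> r1 -> [r2 ->]; exists (rot_add a r1 r2); rewrite rot_rot_add. Qed.

Lemma mem_cycle k m (s t : str k m) : t \in cycle_of s <-> rr (Delta s) (Delta t).
Proof.
rewrite inE; split.
- move/iter_findex => <-; rewrite Delta_iter; by eexists.
- case=> r hr.
  have [r' hr'] : exists r', Delta t = rot (r' %% m.+1) (Delta s).
    case: (leqP r m.+1) => h.
    + by exists r; rewrite hr (rot_mod (r := r)) ?size_Delta.
    + by exists 0%N; rewrite hr rot_oversize ?size_Delta ?mod0n ?rot0 //; apply: ltnW.
  rewrite -Delta_iter in hr'.
  have := Delta_shift (esym hr'); set u := iter r' _ _; move=> ->.
  set c := t (inord 0) - u (inord 0).
  rewrite -(natr_Zp c) -iter_const -iterD.
  exact: fconnect_iter.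
Qed.

Lemma sum_Delta k m (s : str k m) : \sum_(x <- Delta s) x = -1.
Proof.
rewrite big_map.
change (\sum_(0 <= i < m.+1) (if i == 0%N then s (inord m) - s ord0 - 1
        else s (inord i.-1) - s (inord i)) = -1).
rewrite big_nat_recl //= ord0_inord.
have aux : forall p, \sum_(0 <= i < p) (s (inord i) - s (inord i.+1)) = s (inord 0) - s (inord p).
  elim => [|p IH]; first by rewrite big_geq // subrr.
  rewrite big_nat_recr //= IH; ring.
rewrite aux; ring.
Qed.

Lemma sum_rot (K : nmodType) (d : seq K) r : \sum_(x <- rot r d) x = \sum_(x <- d) x.
Proof. by apply: perm_big; rewrite perm_rot. Qed.

Lemma sum_set_nth (K : zmodType) (d : seq K) i y : (i < size d)%N ->
  \sum_(x <- set_nth 0 d i y) x = \sum_(x <- d) x - nth 0 d i + y.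
Proof.
elim: d i => [|x d IH] [|i] //= hi.
- by rewrite !big_cons [x + _]addrC addrK addrC.
- rewrite !big_cons IH //. by rewrite !addrA.
Qed.

Lemma Delta_exists k m (D : seq 'Z_k) : size D = m.+1 -> \sum_(x <- D) x = -1 ->
  exists s : str k m, Delta s = D.
Proof.
move=> hsz hsum.
pose f l := - \sum_(0 <= i < l) nth 0 D i.+1.
exists [ffun i : 'I_m.+1 => f (val i)].
apply: (@eq_from_nth _ 0); first by rewrite size_Delta hsz.
rewrite size_Delta => l hl; rewrite nth_Delta //.
rewrite !ffunE /= !inordK //; try lia.
case: eqP => [->|l0].
- move: hsum; rewrite (big_nth 0) hsz big_nat_recl //= => hsum.
  have e : \sum_(0 <= i < m) nth 0 D i.+1 = -1 - nth 0 D 0.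
    by rewrite -hsum; ring.
  rewrite /f /= e big_geq //; ring.
- rewrite /f /= (_ : l = l.-1.+1) ?big_nat_recr //=; last by lia.
  ring.
Qed.

Lemma lexle_refl k (a : seq 'Z_k) : lexle a a.
Proof. by elim: a => //= x a ->; rewrite eqxx ltnn. Qed.

Lemma lexle_trans k (a b c : seq 'Z_k) : lexle a b -> lexle b c -> lexle a c.
Proof.
elim: a b c => [//|x a IH] [|y b] [|z c] //=.
move=> /orP[hxy|/andP[/eqP exy hab]] /orP[hyz|/andP[/eqP eyz hbc]].
- by rewrite (ltn_trans hxy hyz).
- by rewrite -eyz hxy.
- by rewrite exy hyz.
- by rewrite exy eyz eqxx (IH _ _ hab hbc) orbT.
Qed.

Lemma lexle_total k (a b : seq 'Z_k) : lexle a b || lexle b a.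
Proof.
elim: a b => [//|x a IH] [|y b] //=.
case: (ltngtP x y) => h.
- by [].
- by rewrite orbT.
- have exy : x = y by apply: val_inj.
  by rewrite exy eqxx /=; apply: IH.
Qed.

Lemma foldl_min k (L : seq (seq 'Z_k)) x0 :
  let r := foldl (fun mn r => if lexle r mn then r else mn) x0 L in
  (r = x0 \/ r \in L) /\ lexle r x0 /\ all (lexle r) L.
Proof.
elim: L x0 => [|y L IH] x0 /=; first by split; [left|split; [apply: lexle_refl|]].
set x1 := if lexle y x0 then y else x0.
have [h1 [h2 h3]] := IH x1.
have [e1 e2] : lexle x1 x0 /\ lexle x1 y.
  rewrite /x1; case: ifP => h; first by split; [|apply: lexle_refl].
  split; first exact: lexle_refl.
  by have := lexle_total y x0; rewrite h.
split; last split.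
- case: h1 => [->|hin]; last by right; rewrite inE hin orbT.
  by rewrite /x1; case: ifP => _; [right; rewrite inE eqxx|left].
- exact: lexle_trans h2 e1.
- by rewrite h3 (lexle_trans h2 e2).
Qed.

Lemma minrot_rot k (d : seq 'Z_k) : exists r, minrot d = rot r d.
Proof.
have [[h|h] _] := foldl_min [seq rot i d | i <- iota 0 (size d)] d.
- by exists 0%N; rewrite rot0 /minrot h.
- by case/mapP: h => r _ e; exists r; rewrite /minrot e.
Qed.

Lemma minrot_le k (d e : seq 'Z_k) : rr d e -> (0 < size d)%N -> lexle (minrot d) e.
Proof.
case=> r -> hs.
have [_ [_ hall]] := foldl_min [seq rot i d | i <- iota 0 (size d)] d.
case: (ltnP r (size d)) => h.
- by apply: (allP hall); apply: map_f; rewrite mem_iota.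
- rewrite rot_oversize //.
  by rewrite -{2}(rot0 d); apply: (allP hall); apply: map_f; rewrite mem_iota.
Qed.

Lemma lexlt_at k i (a b : seq 'Z_k) : (i < size a)%N -> (i < size b)%N ->
  (forall l, (l < i)%N -> nth 0 a l = nth 0 b l) -> (nat_of_ord (nth 0%R a i) < nat_of_ord (nth 0%R b i))%N ->
  lexle a b && ~~ lexle b a.
Proof.
elim: i a b => [|i IH] [|x a] [|y b] //= ha hb hpre hlt.
- rewrite hlt /= negb_or negb_and (ltnNge y x) (ltnW hlt) /=.
  by apply/orP; left; apply/negP => /eqP e; move: hlt; rewrite e ltnn.
- have exy : x = y by apply: (hpre 0%N).
  rewrite exy eqxx ltnn /=.
  apply: IH => // l hl; exact: (hpre l.+1).
Qed.

Lemma val_pred k (hk : (1 < k)%N) (x : 'Z_k) : x != 0 -> (nat_of_ord (x - 1)%R < nat_of_ord x)%N.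
Proof.
move=> hx.
have hxv : (0 < nat_of_ord x)%N by rewrite lt0n; apply: contra hx => /eqP h; apply/eqP; apply: val_inj.
have hlt : (nat_of_ord x < k)%N.
  have h1 := ltn_ord x; have h2 := Zp_cast hk. lia.
have -> : x - 1 = ((nat_of_ord x).-1)%:R.
  rewrite -{1}(natr_Zp x) -{1}(prednK hxv) -GRing.natr1; by rewrite addrK.
rewrite val_Zp_nat // modn_small; lia.
Qed.

Definition mu k m (D : seq 'Z_k) := #|[pred t : m.+1.-tuple 'Z_k | lexle t D]|.

Lemma mu_lt k m (a b : seq 'Z_k) : size b = m.+1 -> lexle a b -> ~~ lexle b a ->
  (mu m a < mu m b)%N.
Proof.
move=> hsz hab hba; apply: proper_card; apply/properP; split.
- by apply/subsetP => t; rewrite !inE => h; exact: lexle_trans h hab.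
- exists (@Tuple m.+1 _ b (introT eqP hsz)); rewrite !inE /= ?lexle_refl //.
Qed.

Lemma roteq_rr k (a b : seq 'Z_k) : (0 < size a)%N -> roteq a b <-> rr a b.
Proof.
move=> hs; split.
- by case/hasP => r _ /eqP <-; exists r.
- case=> r ->; apply/hasP.
  case: (ltnP r (size a)) => h.
  + by exists r; rewrite ?mem_iota.
  + by exists 0%N; rewrite ?mem_iota // rot0 rot_oversize.
Qed.

Lemma DeltaU_cycle k m (u : str k m) :
  exists2 u', u' \in cycle_of u & DeltaU (cycle_of u) = minrot (Delta u').
Proof.
rewrite /DeltaU; case: pickP => [u' hu'|h]; first by exists u'.
by have := h u; rewrite inE connect0.
Qed.

Lemma mem_cycle' k m (u u' : str k m) x : u' \in cycle_of u ->
  (x \in cycle_of u <-> rr (Delta u') (Delta x)).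
Proof.
move/mem_cycle => h; rewrite mem_cycle; split => hx.
- exact: rr_trans (rr_sym h) hx.
- exact: rr_trans h hx.
Qed.

Lemma step k m (hk : (1 < k)%N) (u : str k m) : cycle_of u != Root k m ->
  exists t : str k m, tparent (cycle_of u) = cycle_of t /\
    Garc (tparent (cycle_of u)) (cycle_of u) /\
    (mu m (DeltaU (cycle_of t)) < mu m (DeltaU (cycle_of u)))%N.
Proof.
move=> hR.
have [u' hu' hDU] := DeltaU_cycle u.
set D := minrot (Delta u') in hDU.
have [r0 hr0] := minrot_rot (Delta u'); rewrite -/D in hr0.
have hsD : size D = m.+1 by rewrite hr0 size_rot size_Delta.
have hsum : \sum_(x <- D) x = -1 by rewrite hr0 sum_rot sum_Delta.
have hmem : forall x, x \in cycle_of u <-> rr D (Delta x).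
  move=> x; rewrite (mem_cycle' x hu'); split => h.
  - exact: rr_trans (rr_sym (ex_intro _ r0 hr0)) h.
  - exact: rr_trans (ex_intro _ r0 hr0) h.
set i := find (fun x => x != 0) D.
have hbefore : forall l, (l < i)%N -> nth 0 D l = 0.
  by move=> l hl; apply/eqP; apply: negbFE; apply: (before_find _ hl).
case: (ltnP i m) => him; last first.
  exfalso; move/negP: hR; apply; apply/eqP.
  pose z : str k m := [ffun => 0].
  have hD0 : D = rot 1 (Delta z).
    apply: (@eq_from_nth _ 0); first by rewrite size_rot size_Delta.
    rewrite hsD => l hl.
    have h1 : (1 <= size (Delta z))%N by rewrite size_Delta.
    have h2 : (l < size (Delta z))%N by rewrite size_Delta.
    rewrite (nth_rot _ h1 h2) size_Delta nth_Delta ?ltn_mod // /z !ffunE.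
    case: (ltnP l m) => hlm.
    + rewrite hbefore; last by lia.
      rewrite modn_small; last by lia.
      by rewrite addn1 /= subrr.
    + have -> : l = m by lia.
      rewrite addn1 modnn /=.
      move: hsum; rewrite (big_nth 0) hsD big_nat_recr //=.
      rewrite big1_seq ?add0r => [->|]; first by rewrite oppr0 sub0r.
      move=> l' /=; rewrite mem_index_iota => /andP[_ hl']; apply: hbefore; lia.
  have hzD : rr (Delta z) D by rewrite hD0; exists 1%N.
  apply/setP => x; apply/idP/idP => hx.
  - apply/mem_cycle; exact: rr_trans hzD ((hmem x).1 hx).
  - apply/hmem; move/mem_cycle: hx; exact: rr_trans (rr_sym hzD).
have hin : (i < m.+1)%N by lia.
have hDi : nth 0 D i != 0.
  by apply: (@nth_find _ 0 (fun x => x != 0)); rewrite has_find hsD.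
set A := parentArray (DeltaU (cycle_of u)).
have nthA : forall p, nth 0 A p =
    if p == i.+1 then nth 0 D i.+1 + 1 else if p == i then nth 0 D i - 1 else nth 0 D p.
  move=> p; rewrite /A hDU /parentArray -/i hsD (modn_small (m := i.+1)); last by lia.
  have ne : (i.+1 == i) = false by apply/eqP; lia.
  by rewrite nth_set_nth /= nth_set_nth /= nth_set_nth /= ne.
have hsA : size A = m.+1.
  rewrite /A hDU /parentArray -/i hsD (modn_small (m := i.+1)); last by lia.
  rewrite !size_set_nth hsD; lia.
have hsumA : \sum_(x <- A) x = -1.
  rewrite /A hDU /parentArray -/i hsD (modn_small (m := i.+1)); last by lia.
  rewrite !sum_set_nth ?size_set_nth ?hsD ?hsum; try lia.
  rewrite !nth_set_nth /= (_ : (i.+1 == i) = false); last by apply/eqP; lia.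
  ring.
have [t ht] := Delta_exists hsA hsumA.
have hpar : tparent (cycle_of u) = cycle_of t.
  apply/setP => x; rewrite /tparent inE -/A.
  have hsz : (0 < size (Delta x))%N by rewrite size_Delta.
  apply/idP/idP => hx.
  - apply/mem_cycle; rewrite ht; apply: rr_sym; exact/(@roteq_rr _ _ _ hsz).
  - apply/(@roteq_rr _ _ _ hsz).
    by apply: rr_sym; rewrite -ht; apply/mem_cycle.
exists t; split; first exact: hpar.
split.
- have hsA' : size (rot i A) = m.+1 by rewrite size_rot.
  have hsumA' : \sum_(x <- rot i A) x = -1 by rewrite sum_rot.
  have [s hs] := Delta_exists hsA' hsumA'.
  apply/existsP; exists s; apply/andP; split.
    by rewrite hpar; apply/mem_cycle; rewrite hs ht; exists i.
  apply/hmem; exists i.+1.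
  apply: (@eq_from_nth _ 0); first by rewrite size_rot size_Delta hsD.
  rewrite size_Delta => l hl.
  have h1 : (i <= size A)%N by rewrite hsA; lia.
  have h2 : (i.+1 <= size D)%N by rewrite hsD; lia.
  have h3 : (l < size D)%N by rewrite hsD.
  rewrite nth_Delta_ICR // hs.
  have h4 : ((l + 1) %% m.+1 < size A)%N by rewrite hsA ltn_mod.
  rewrite (nth_rot _ h1 h4) (nth_rot _ h2 h3) hsA hsD modnDml.
  rewrite (_ : (l + 1 + i = l + i.+1)%N); last by lia.
  set p := ((l + i.+1) %% m.+1)%N.
  have hp : p = (if (l + i.+1 < m.+1)%N then l + i.+1 else l + i.+1 - m.+1)%N.
    rewrite /p; case: ifP => h; first by rewrite modn_small.
    have e : (l + i.+1 = (l + i.+1 - m.+1) + m.+1)%N by lia.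
    by rewrite e modnDr modn_small; lia.
  have E1 : (p == i.+1) = (l == 0%N).
    apply/idP/idP => /eqP h; apply/eqP; move: h; rewrite hp; case: ifP; lia.
  have E2 : (p == i) = (l == m).
    apply/idP/idP => /eqP h; apply/eqP; move: h; rewrite hp; case: ifP; lia.
  rewrite nthA E1 E2.
  case: (eqVneq l 0%N) => [l0|l0].
  + have -> : (l == m) = false by apply/eqP; lia.
    have -> : p = i.+1 by apply/eqP; rewrite E1 l0.
    ring.
  + case: (eqVneq l m) => [lm|lm].
    * have -> : p = i by apply/eqP; rewrite E2 lm.
      ring.
    * ring.
- have [t' ht' hDt] := DeltaU_cycle t.
  have hle : lexle (DeltaU (cycle_of t)) A.
    rewrite hDt; apply: minrot_le; last by rewrite size_Delta.
    by rewrite -ht; apply: rr_sym; apply/mem_cycle.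
  have hlt : lexle A D && ~~ lexle D A.
    apply: (@lexlt_at _ i); rewrite ?hsA ?hsD //.
    + move=> l hl; rewrite nthA.
      rewrite (_ : (l == i.+1) = false); last by apply/eqP; lia.
      by rewrite (_ : (l == i) = false) //; apply/eqP; lia.
    + rewrite nthA (_ : (i == i.+1) = false) ?eqxx; last by apply/eqP; lia.
      exact: val_pred.
  case/andP: hlt => hAD hDA.
  rewrite hDU; apply: mu_lt => //.
  + exact: lexle_trans hle hAD.
  + apply/negP => h; move/negP: hDA; apply; exact: lexle_trans h hle.
Qed.

Lemma reach k m (hk : (1 < k)%N) N (u : str k m) :
  (mu m (DeltaU (cycle_of u)) < N)%N ->
  exists t : nat, iter t (@tparent k m) (cycle_of u) = Root k m.
Proof.
elim: N u => [//|N IH] u hN.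
case: (eqVneq (cycle_of u) (Root k m)) => h; first by exists 0%N.
have [t [hp [_ hlt]]] := step hk h.
have [T hT] := IH t (leq_trans hlt hN).
by exists T.+1; rewrite iterSr hp.
Qed.

Theorem lemma14 (k m : nat) (hk : (1 < k)%N) :
  forall U : {set str k m}, U \in Ncycles k m -> U != Root k m ->
    [/\ tparent U \in Ncycles k m,
        Garc (tparent U) U
      & exists t : nat, iter t (@tparent k m) U = Root k m].
Proof.
move=> U /imsetP [u _ ->] hR.
have [t [hp [hg _]]] := step hk hR.
split => //.
- by rewrite hp; apply/imsetP; exists t; rewrite ?inE.
- exact: (reach hk (ltnSn _)).
Qed.
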